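(* Let $X$ be a real Banach space whose norm is Fréchet differentiable. Then an element $x\in\ell^1(X)$ is a right symmetric point of $\ell^1(X)$ if and only if there is an index $n$ such that $x_k=0$ for all $k\neq n$ and $x_n$ is a right symmetric point of $X$, i.e. $x=(0,\dots,0,x_n,0,\dots)$ with $x_n$ right symmetric in $X$.
   Context: $\ell^1(X)$ is the space of sequences $(x_n)_{n\in\mathbb{N}}$ in $X$ with $\|(x_n)\|=\sum_n\|x_n\|<\infty$. In a real normed space $Y$, $x\perp_{BJ}y$ means $\|x+\lambda y\|\ge\|x\|$ for all $\lambda\in\mathbb{R}$; $x$ is a right symmetric point if $y\perp_{BJ}x$ implies $x\perp_{BJ}y$ for all $y\in Y$. The norm of $X$ is Fréchet differentiable if for every non-zero $x$ there is $\varphi\in X^*$ with $\lim_{h\to0}\big|\|x+h\|-\|x\|-\varphi(h)\big|/\|h\|=0$. *)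

(* Defs.v *)
From HB Require Import structures.
From mathcomp Require Import all_boot all_order all_algebra.
From mathcomp Require Import all_classical all_reals all_analysis.
Set Implicit Arguments. Unset Strict Implicit. Unset Printing Implicit Defensive.
Import Order.TTheory GRing.Theory Num.Theory.
Import numFieldNormedType.Exports.
Local Open Scope classical_set_scope.
Local Open Scope ring_scope.

Definition bj_orth (R : realType) (X : normedModType R) (x y : X) : Prop :=
  forall l : R, `|x| <= `|x + l *: y|.

Definition right_symmetric (R : realType) (X : normedModType R) (x : X) : Prop :=
  forall y : X, bj_orth y x -> bj_orth x y.

Definition frechet_diff_norm (R : realType) (X : normedModType R) : Prop :=
  forall x : X, x != 0 ->
    exists phi : X -> R,
      (forall (a : R) (u v : X), phi (a *: u + v) = a * phi u + phi v) /\
      continuous phi /\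
      (fun h : X => (`|x + h| - `|x| - phi h) / `|h|) @ (0 : X)^' --> (0 : R).

Definition l1_norm (R : realType) (X : normedModType R) (x : nat -> X) : \bar R :=
  (\sum_(0 <= k <oo) (`|x k|)%:E)%E.

Definition in_l1 (R : realType) (X : normedModType R) (x : nat -> X) : Prop :=
  (l1_norm x < +oo)%E.

Definition l1_bj_orth (R : realType) (X : normedModType R) (x y : nat -> X) : Prop :=
  forall l : R, (l1_norm x <= l1_norm (fun k => (x k + l *: y k)%R))%E.

Definition l1_right_symmetric (R : realType) (X : normedModType R) (x : nat -> X) : Prop :=
  forall y : nat -> X, in_l1 y -> l1_bj_orth y x -> l1_bj_orth x y.

(* Main.v *)
Require Import Defs.
From HB Require Import structures.
From mathcomp Require Import all_boot all_order all_algebra.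
From mathcomp Require Import all_classical all_reals all_analysis.
Import Order.TTheory GRing.Theory Num.Theory.
Import numFieldNormedType.Exports.
Local Open Scope ring_scope.

Section H.
Context {R : realType} {X : normedModType R}.

Definition S (n : nat) (u : nat -> X) : \bar R :=
  (\sum_(0 <= k <oo | k != n) (`|u k|)%:E)%E.

Lemma l1_split (u : nat -> X) n : l1_norm u = (`|u n|%:E + S n u)%E.
Proof.
rewrite /l1_norm /S (@nneseriesD1 _ _ n) //.
Qed.

Lemma S_ge0 n u : (0 <= S n u)%E.
Proof. by apply: nneseries_ge0. Qed.

Lemma S_eq {n} {u v : nat -> X} : (forall k, k != n -> `|u k| = `|v k|) -> S n u = S n v.
Proof. by move=> h; apply: eq_eseriesr => k /h ->. Qed.

Lemma S_ge_term {n j} (u : nat -> X) : j != n -> (`|u j|%:E <= S n u)%E.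
Proof.
move=> jn; rewrite /S (@nneseriesD1 _ _ j) //.
by rewrite leeDl //; apply: nneseries_ge0.
Qed.

Lemma S_fin n (u : nat -> X) : in_l1 u -> S n u \is a fin_num.
Proof.
rewrite /in_l1 (l1_split u n) => h.
rewrite ge0_fin_numE ?S_ge0 //.
apply: le_lt_trans h; rewrite leeDr //.
Qed.

Lemma l1_norm0 {u : nat -> X} {n} : (forall k, k != n -> u k = 0) -> l1_norm u = `|u n|%:E.
Proof.
move=> h; rewrite (l1_split u n) /S eseries0 ?adde0 // => k _ /h ->.
by rewrite normr0.
Qed.
End H.

Lemma fwd_rs (R : realType) (X : normedModType R) (x : nat -> X) n :
  l1_right_symmetric x -> (forall k, k <> n -> x k = 0) -> right_symmetric (x n).
Proof.
move=> hRS hz z hzx l.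
pose y := fun k => if k == n then z else 0.
have ey : forall k, k != n -> y k = 0 by move=> k /negbTE kn; rewrite /y kn.
have yn : y n = z by rewrite /y eqxx.
have hz' : forall k, k != n -> x k = 0 by move=> k /eqP; exact: hz.
have yl1 : in_l1 y by rewrite /in_l1 (l1_norm0 ey) ltry.
have yx : l1_bj_orth y x.
  move=> m; rewrite (l1_norm0 ey) (l1_norm0 (n:=n)); last first.
    by move=> k kn; rewrite ey // hz' // scaler0 addr0.
  by rewrite lee_fin yn; exact: hzx.
have := hRS y yl1 yx l.
rewrite (l1_norm0 hz') (l1_split _ n) yn (S_eq (v := fun _ => (0 : X))); last first.
  by move=> k kn; rewrite hz' // ey // scaler0 addr0.
rewrite /S eseries0 ?adde0 ?lee_fin //.
by move=> k _ _; rewrite normr0.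
Qed.

Lemma two_nz (R : realType) (X : normedModType R) (x : nat -> X) i j :
  in_l1 x -> l1_right_symmetric x -> i != j -> x i != 0 -> `|x i| <= `|x j| -> False.
Proof.
move=> hx hRS ij xi0 le_ij.
pose y := fun k => if k == i then x i else 0.
have ey : forall k, k != i -> y k = 0 by move=> k /negbTE kn; rewrite /y kn.
have yi : y i = x i by rewrite /y eqxx.
have yl1 : in_l1 y by rewrite /in_l1 (l1_norm0 ey) ltry.
have yx : l1_bj_orth y x.
  move=> l; rewrite (l1_norm0 ey) (l1_split _ i) yi.
  apply: le_trans (leeD2l _ (S_ge_term (fun k => y k + l *: x k) (j:=j) _)); last by rewrite eq_sym.
  rewrite ey; last by rewrite eq_sym.
  rewrite add0r -EFinD lee_fin.
  have h1 : `|x i| <= `|x i + l *: x i| + `|l *: x i|.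
    by rewrite -[X in `|X| <= _](addrK (l *: x i)) ler_normB.
  apply: le_trans h1 _; rewrite lerD2l !normrZ.
  by apply: ler_wpM2l.
have := hRS y yl1 yx (-1).
rewrite (l1_split x i) (l1_split _ i) yi scaleN1r subrr normr0.
rewrite (S_eq (v := x)); last by move=> k ki; rewrite ey // scaler0 addr0.
rewrite leeD2rE; last exact: S_fin.
by rewrite lee_fin normr_le0 (negbTE xi0).
Qed.

Arguments two_nz {R X x i j}.
Arguments fwd_rs {R X x n}.

Theorem corollary3p12 (R : realType) (X : completeNormedModType R)
  (hX : frechet_diff_norm X) (x : nat -> X) (hx : in_l1 x) :
  l1_right_symmetric x <->
  exists n : nat, (forall k : nat, k <> n -> x k = 0) /\ right_symmetric (x n).
Proof.
split.
- move=> hRS.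
  have hz : forall i j, i != j -> x i != 0 -> x j = 0.
    move=> i j ij xi0; case: (eqVneq (x j) 0) => // xj0; exfalso.
    case: (lerP `|x i| `|x j|) => h.
      exact: (two_nz hx hRS ij xi0 h).
    by apply: (two_nz hx hRS (i:=j) (j:=i) _ xj0 (ltW h)); rewrite eq_sym.
  case: (pselect (exists n, x n != 0)) => [[n xn0]|none].
    have hz' : forall k, k <> n -> x k = 0.
      by move=> k /eqP kn; apply: (hz n k) => //; rewrite eq_sym.
    by exists n; split => //; exact: fwd_rs.
  have hz' : forall k, k <> 0%N -> x k = 0.
    by move=> k _; case: (eqVneq (x k) 0) => // xk; exfalso; apply: none; exists k.
  by exists 0%N; split => //; exact: fwd_rs.
- move=> [n [hz hrs]] y yl1 yx l.
  have hz' : forall k, k != n -> x k = 0 by move=> k /eqP; exact: hz.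
  rewrite (l1_norm0 hz') (l1_split _ n).
  apply: le_trans (leeDl _ (S_ge0 _ _)).
  rewrite lee_fin; apply: hrs => m.
  have := yx m.
  rewrite (l1_split y n) (l1_split _ n) (S_eq (n:=n) (v := y)); last first.
    by move=> k kn; rewrite hz' // scaler0 addr0.
  by rewrite leeD2rE ?lee_fin //; exact: S_fin.
Qed.
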